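(* Let $q\geq4$ be an even integer and let $(X,\{R_i\}_{i=0}^3)$ be a symmetric 3-class association scheme with adjacency matrices $A_0=I,A_1,A_2,A_3$, intersection numbers $p_{ij}^k$, and first eigenmatrix \[ P=\begin{bmatrix}1&\frac{q^2}{2}-q&\frac{q^2}{2}&q-2\\ 1&\frac q2&-\frac q2&-1\\ 1&-\frac q2+1&-\frac q2&q-2\\ 1&-\frac q2&\frac q2&-1\end{bmatrix}. \] Let $W=I+\sum_{i=1}^3w_iA_i$ be a type-II matrix. Then \[ H(W)=\{w_i^{\pm2}\mid i=1,2,3\}\cup\left\{\left(\frac{w_{i_1}w_{i_2}}{w_{i_3}}\right)^{\pm1}\;\middle|\;1\leq i_1,i_2,i_3\leq3,\ p_{i_2,i_3}^{i_1}>0\right\}\cup\left\{\frac{w_{i_1}w_{i_2}}{w_{j_1}w_{j_2}}\;\middle|\;i_1,i_2,j_1,j_2\in\{1,2,3\}\right\}. \]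
   Context: An association scheme $(X,\{R_i\}_{i=0}^d)$ is a partition of $X\times X$ into relations $R_0=\{(x,x)\}$, $R_1,\dots,R_d$ such that for $(x,y)\in R_k$ the number $p_{ij}^k=|\{z:(x,z)\in R_i,(z,y)\in R_j\}|$ depends only on $i,j,k$; symmetric means each $R_i$ is symmetric; $A_i$ is the $(0,1)$-matrix of $R_i$. With primitive idempotents $E_0=\frac1{|X|}J,E_1,E_2,E_3$ of the span of the $A_i$, the first eigenmatrix is defined by $A_j=\sum_iP_{i,j}E_i$ (here $|X|=q^2-1$; the intersection numbers are determined by $P$). A type-II matrix is a square matrix $W$ of order $n$ with nonzero complex entries such that $W(W^{(-)})^\top=nI$, $W^{(-)}$ the entrywise inverse. The Haagerup set of $W$ (indexed by $X$) is \[ H(W)=\left\{\frac{W_{x_1,y_1}W_{x_2,y_2}}{W_{x_1,y_2}W_{x_2,y_1}}\;\middle|\;x_1,x_2,y_1,y_2\in X\right\}. \] *)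

(* Defs.v *)
From HB Require Import structures.
From mathcomp Require Import all_boot all_order all_algebra.
From mathcomp Require Import algC.
Set Implicit Arguments. Unset Strict Implicit. Unset Printing Implicit Defensive.
Import Order.TTheory GRing.Theory Num.Theory.
Local Open Scope ring_scope.

(* A 3-class scheme on the point set X = 'I_n is given by rel : X -> X -> 'I_4,
   with (x,y) \in R_i  <->  rel x y = i. *)

Definition is_sym_scheme (n : nat) (rel : 'I_n -> 'I_n -> 'I_4) : Prop :=
  [/\ (forall x y, (rel x y == ord0) = (x == y)),
      (forall x y, rel x y = rel y x),
      (forall i : 'I_4, exists x y, rel x y = i) &
      (forall (i j : 'I_4) x y x' y', rel x y = rel x' y' ->
         #|[set z | (rel x z == i) && (rel z y == j)]| =
         #|[set z | (rel x' z == i) && (rel z y' == j)]|)].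

(* intersection number p_{ij}^k, computed at some pair (x,y) in R_k (0 if R_k empty) *)
Definition inter_num (n : nat) (rel : 'I_n -> 'I_n -> 'I_4) (i j k : 'I_4) : nat :=
  match [pick xy : 'I_n * 'I_n | rel xy.1 xy.2 == k] with
  | Some xy => #|[set z | (rel xy.1 z == i) && (rel z xy.2 == j)]|
  | None => 0%N
  end.

Definition adj (n : nat) (rel : 'I_n -> 'I_n -> 'I_4) (i : 'I_4) : 'M[algC]_n :=
  \matrix_(x, y) (rel x y == i)%:R.

Definition Pmat (q : nat) : 'M[algC]_4 :=
  let Q : algC := q%:R in
  \matrix_(i < 4, j < 4) nth 0 (nth [::]
    ([:: [:: 1; Q ^+ 2 / 2 - Q; Q ^+ 2 / 2; Q - 2];
        [:: 1; Q / 2; - (Q / 2); -1];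
        [:: 1; - (Q / 2) + 1; - (Q / 2); Q - 2];
        [:: 1; - (Q / 2); Q / 2; -1]] : seq (seq algC)) i) j.

Definition has_first_eigenmatrix (n : nat) (rel : 'I_n -> 'I_n -> 'I_4)
    (P : 'M[algC]_4) : Prop :=
  exists E : 'I_4 -> 'M[algC]_n,
    [/\ E ord0 = (n%:R)^-1 *: const_mx 1,
        (forall i j, E i *m E j = if i == j then E i else 0),
        \sum_i E i = 1%:M,
        (forall i, E i != 0) &
        (forall j, adj rel j = \sum_i P i j *: E i)].

Definition Wmat (n : nat) (rel : 'I_n -> 'I_n -> 'I_4) (w : 'I_4 -> algC) : 'M[algC]_n :=
  1%:M + \sum_(i : 'I_4 | i != ord0) w i *: adj rel i.

Definition type_II (n : nat) (W : 'M[algC]_n) : Prop :=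
  (forall x y, W x y != 0) /\ W *m (map_mx GRing.inv W)^T = (n%:R)%:M.

Definition haagerup (n : nat) (W : 'M[algC]_n) (z : algC) : Prop :=
  exists x1 x2 y1 y2, z = W x1 y1 * W x2 y2 / (W x1 y2 * W x2 y1).

(* Main.v *)
Require Import Defs.
From HB Require Import structures.
From mathcomp Require Import all_boot all_order all_algebra.
From mathcomp Require Import algC.
From mathcomp Require Import ring.
Import Order.TTheory GRing.Theory Num.Theory.
Local Open Scope ring_scope.
Set Implicit Arguments. Unset Strict Implicit. Unset Printing Implicit Defensive.

Section Aux.
Variables (n : nat) (rel : 'I_n -> 'I_n -> 'I_4).

Lemma adj_mul_entry (a b : 'I_4) x y :
  (adj rel a *m adj rel b) x y =
  (#|[set z | (rel x z == a) && (rel z y == b)]|)%:R.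
Proof.
rewrite !mxE -sum1_card natr_sum [RHS]big_mkcond /=; apply: eq_bigr => z _.
rewrite !mxE in_set.
by case: (rel x z == a); case: (rel z y == b); rewrite ?mulr1 ?mulr0 ?mul0r.
Qed.

Lemma sum_adj_entry (c : 'I_4 -> algC) x y :
  (\sum_k c k *: adj rel k) x y = c (rel x y).
Proof.
rewrite summxE (bigD1 (rel x y)) //= big1 => [|k /negbTE nk].
  by rewrite !mxE eqxx mulr1 addr0.
by rewrite !mxE eq_sym nk mulr0.
Qed.

Lemma adj_mul (P : 'M[algC]_4) (a b : 'I_4) (c : 'I_4 -> algC) :
  has_first_eigenmatrix rel P ->
  (forall i, P i a * P i b = \sum_k c k * P i k) ->
  adj rel a *m adj rel b = \sum_k c k *: adj rel k.
Proof.
move=> [E [_ hEE _ _ hA]] hc.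
rewrite !hA mulmx_suml.
under eq_bigr => i _ do rewrite mulmx_sumr.
have -> : \sum_k c k *: adj rel k = \sum_k \sum_i (c k * P i k) *: E i.
  by apply: eq_bigr => k _; rewrite hA scaler_sumr; apply: eq_bigr => i _; rewrite scalerA.
rewrite [RHS]exchange_big /=; apply: eq_bigr => i _.
rewrite (bigD1 i) //= big1 => [|j /negbTE nj].
  by rewrite -scalemxAl -scalemxAr hEE eqxx addr0 scalerA hc scaler_suml.
by rewrite -scalemxAl -scalemxAr hEE eq_sym nj !scaler0.
Qed.

End Aux.

Definition Pc (h : algC) : 'M[algC]_4 :=
  \matrix_(i < 4, j < 4) nth 0 (nth [::]
    ([:: [:: 1; 2 * h ^+ 2 - 2 * h; 2 * h ^+ 2; 2 * h - 2];
        [:: 1; h; - h; -1];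
        [:: 1; - h + 1; - h; 2 * h - 2];
        [:: 1; - h; h; -1]] : seq (seq algC)) i) j.

Definition ccl (h : algC) (a b : nat) : seq algC :=
  match a, b with
  | 1, 1 => [:: 2 * h ^+ 2 - 2 * h; (h - 1) ^+ 2; (h - 1) ^+ 2; (h - 2) * h]
  | 1, 2 | 2, 1 => [:: 0; h * (h - 1); h * (h - 1); h ^+ 2]
  | 1, 3 | 3, 1 => [:: 0; h - 2; h - 1; 0]
  | 2, 2 => [:: 2 * h ^+ 2; h ^+ 2; h ^+ 2; h ^+ 2]
  | 2, 3 | 3, 2 => [:: 0; h; h - 1; 0]
  | 3, 3 => [:: 2 * h - 2; 0; 0; 2 * h - 3]
  | _, _ => [::]
  end.

Definition cc (h : algC) (a b : 'I_4) (k : 'I_4) : algC := nth 0 (ccl h a b) k.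

Lemma Pmat_eq (q h : nat) i j : q = (h * 2)%N -> Pmat q i j = Pc h%:R i j.
Proof.
move=> ->; rewrite /Pmat !mxE natrM.
have h2 : (2 : algC) != 0 by rewrite pnatr_eq0.
by case: i => [[|[|[|[|i]]]] Hi] //=; case: j => [[|[|[|[|j]]]] Hj] //=; field.
Qed.

Lemma Pc_ident (h : algC) (a b : 'I_4) : a != ord0 -> b != ord0 ->
  forall i, Pc h i a * Pc h i b = \sum_k cc h a b k * Pc h i k.
Proof.
move=> Ha Hb i; rewrite !big_ord_recr big_ord0 /= /cc !mxE /=.
case: a Ha => [[|[|[|[|a]]]] Ha] //= _; case: b Hb => [[|[|[|[|b]]]] Hb] //= _;
case: i => [[|[|[|[|i]]]] Hi] //=; ring.
Qed.

Definition o1 : 'I_4 := @Ordinal 4 1 isT.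
Definition o2 : 'I_4 := @Ordinal 4 2 isT.
Definition o3 : 'I_4 := @Ordinal 4 3 isT.

Lemma cc2_neq0 (h : nat) (a b : 'I_4) : (2 <= h)%N -> a != ord0 -> b != ord0 ->
  ~~ ((a == o3) && (b == o3)) -> cc h%:R a b o2 != 0.
Proof.
move=> h2 Ha Hb Hab.
have h1 : (h%:R - 1 : algC) = (h.-1)%:R by rewrite -[in LHS](prednK (ltnW h2)) -natr1 addrK.
have p1 : (0 : algC) < (h.-1)%:R by rewrite ltr0n -ltnS prednK // ltnW.
have p0 : (0 : algC) < h%:R by rewrite ltr0n ltnW.
apply: lt0r_neq0; rewrite /cc.
case: a Ha Hab => [[|[|[|[|a]]]] Ha] //= _; case: b Hb => [[|[|[|[|b]]]] Hb] //= _ _;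
rewrite ?h1 ?exprn_gt0 ?mulr_gt0 //.
Qed.

Lemma count_pos (q h n : nat) (rel : 'I_n -> 'I_n -> 'I_4) (a b : 'I_4) x y :
  q = (h * 2)%N -> (2 <= h)%N ->
  has_first_eigenmatrix rel (Pmat q) -> rel x y = o2 ->
  a != ord0 -> b != ord0 -> ~~ ((a == o3) && (b == o3)) ->
  exists z, rel x z = a /\ rel z y = b.
Proof.
move=> qh h2 Heig rxy Ha Hb Hab.
have E : adj rel a *m adj rel b = \sum_k cc h%:R a b k *: adj rel k.
  apply: (@adj_mul n rel (Pmat q) a b (cc h%:R a b) Heig) => i; rewrite !(@Pmat_eq q h) // Pc_ident //.
  by apply: eq_bigr => k _; rewrite (@Pmat_eq q h).
have := congr1 (fun M : 'M[algC]_n => M x y) E; rewrite /= adj_mul_entry sum_adj_entry rxy.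
move=> hc; have : (0 < #|[set z | (rel x z == a) && (rel z y == b)]|)%N.
  rewrite lt0n; apply/negP => /eqP h0; move: hc; rewrite h0 => /esym /eqP.
  by apply/negP; apply: cc2_neq0.
by move/card_gt0P => [z]; rewrite in_set => /andP [/eqP ? /eqP ?]; exists z.
Qed.

Section Scheme.
Variables (n : nat) (rel : 'I_n -> 'I_n -> 'I_4) (w : 'I_4 -> algC).
Hypothesis hS : is_sym_scheme rel.

Lemma rel0 x y : (rel x y == ord0) = (x == y).
Proof. by case: hS. Qed.

Lemma relC x y : rel x y = rel y x.
Proof. by case: hS. Qed.

Lemma Wsum x y :
  (\sum_(i : 'I_4 | i != ord0) w i *: adj rel i) x y =
  if rel x y == ord0 then 0 else w (rel x y).
Proof.
rewrite summxE; case: ifP => [/eqP r0|r0].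
  by rewrite big1 // => i Hi; rewrite !mxE r0 eq_sym (negbTE Hi) mulr0.
rewrite (bigD1 (rel x y)) ?r0 //= big1 => [|i /andP [_ Hi]].
  by rewrite !mxE eqxx mulr1 addr0.
by rewrite !mxE eq_sym (negbTE Hi) mulr0.
Qed.

Lemma Wdiag x : Wmat rel w x x = 1.
Proof. by rewrite /Wmat mxE Wsum rel0 !eqxx mxE eqxx addr0. Qed.

Lemma Woff x y : x != y -> Wmat rel w x y = w (rel x y).
Proof.
move=> nxy; rewrite /Wmat mxE Wsum rel0 (negbTE nxy) !mxE (negbTE nxy).
by rewrite add0r.
Qed.

Lemma rel_neq0 x y : x != y -> rel x y != ord0.
Proof. by rewrite rel0. Qed.

Lemma tri (u v t : 'I_n) :
  (0 < inter_num rel (rel u t) (rel t v) (rel u v))%N.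
Proof.
rewrite /inter_num; case: pickP => [xy /eqP Hxy|H0]; last first.
  by have := H0 (u, v); rewrite /= eqxx.
case: hS => _ _ _ H4; rewrite (H4 _ _ _ _ u v) //.
by apply/card_gt0P; exists t; rewrite in_set !eqxx.
Qed.

Lemma tri_inv i j k : (0 < inter_num rel i j k)%N ->
  exists u v t, [/\ rel u v = k, rel u t = i & rel t v = j].
Proof.
rewrite /inter_num; case: pickP => [xy /eqP Hxy|] //.
move/card_gt0P => [t]; rewrite in_set => /andP [/eqP h1 /eqP h2].
by exists xy.1, xy.2, t.
Qed.

End Scheme.

From mathcomp Require Import zify.

Theorem lemma5p4 (q : nat) (n : nat) (rel : 'I_n -> 'I_n -> 'I_4) (w : 'I_4 -> algC) :
  (4 <= q)%N -> ~~ odd q ->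
  is_sym_scheme rel ->
  has_first_eigenmatrix rel (Pmat q) ->
  type_II (Wmat rel w) ->
  forall z : algC,
    haagerup (Wmat rel w) z <->
    [\/ exists i : 'I_4, i != ord0 /\ (z = w i ^+ 2 \/ z = (w i ^+ 2)^-1),
        exists i1 i2 i3 : 'I_4,
          [/\ i1 != ord0, i2 != ord0, i3 != ord0,
              (0 < inter_num rel i2 i3 i1)%N &
              (z = w i1 * w i2 / w i3 \/ z = (w i1 * w i2 / w i3)^-1)] |
        exists i1 i2 j1 j2 : 'I_4,
          [/\ i1 != ord0, i2 != ord0, j1 != ord0, j2 != ord0 &
              z = w i1 * w i2 / (w j1 * w j2)]].
Proof.
move=> q4 qe hS Heig [Wnz _] z.
set h := q./2.
have qh : q = (h * 2)%N.
  by rewrite -[LHS]odd_double_half (negbTE qe) add0n -muln2.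
have h2 : (2 <= h)%N by lia.
have Hex : forall i : 'I_4, exists x y, rel x y = i by case: hS.
have wnz : forall i : 'I_4, i != ord0 -> w i != 0.
  move=> i Hi; have [x [y rxy]] := Hex i.
  have nxy : x != y by rewrite -(rel0 hS) rxy.
  by have := Wnz x y; rewrite (Woff w hS nxy) rxy.
have o1n : o1 != ord0 by [].
have one : z = 1 -> [\/ exists i : 'I_4, i != ord0 /\ (z = w i ^+ 2 \/ z = (w i ^+ 2)^-1),
        exists i1 i2 i3 : 'I_4,
          [/\ i1 != ord0, i2 != ord0, i3 != ord0,
              (0 < inter_num rel i2 i3 i1)%N &
              (z = w i1 * w i2 / w i3 \/ z = (w i1 * w i2 / w i3)^-1)] |
        exists i1 i2 j1 j2 : 'I_4,
          [/\ i1 != ord0, i2 != ord0, j1 != ord0, j2 != ord0 &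
              z = w i1 * w i2 / (w j1 * w j2)]].
  move=> ->; apply: Or33; exists o1, o1, o1, o1; split => //.
  by rewrite divff // mulf_neq0 // wnz.
have Wo : forall x y, x != y -> Wmat rel w x y = w (rel x y).
  by move=> x y H; apply: Woff.
have Wd : forall x, Wmat rel w x x = 1 by move=> x; apply: Wdiag.
have rn : forall x y, x != y -> rel x y != ord0 by move=> x y; apply: rel_neq0.
split.
  case=> x1 [x2 [y1 [y2 hz]]].
  case: (eqVneq x1 x2) => [ex|nx].
    apply: one; rewrite hz -ex [Wmat rel w x1 y2 * _]mulrC divff //.
    by rewrite mulf_neq0.
  have nx' : x2 != x1 by rewrite eq_sym.
  case: (eqVneq y1 y2) => [ey|ny].
    apply: one; rewrite hz -ey divff //.
    by rewrite mulf_neq0.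
  case: (eqVneq x1 y1) => [e1|n1].
    subst y1; case: (eqVneq x2 y2) => [e2|n2].
      subst y2; apply: Or31; exists (rel x1 x2); split; first exact: rn.
      right; rewrite hz !Wd (Wo _ _ nx) (Wo _ _ nx') (relC hS x2 x1).
      by rewrite mul1r div1r expr2.
    apply: Or32; exists (rel x1 y2), (rel x1 x2), (rel x2 y2); split.
    - exact: rn.
    - exact: rn.
    - exact: rn.
    - exact: tri.
    right; rewrite hz Wd (Wo _ _ ny) (Wo _ _ n2) (Wo _ _ nx') (relC hS x2 x1).
    by rewrite invf_div mul1r.
  case: (eqVneq x2 y2) => [e2|n2].
    subst y2; have n4 : x2 != y1 by rewrite eq_sym.
    apply: Or32; exists (rel x1 x2), (rel x2 y1), (rel x1 y1); split.
    - exact: rn.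
    - exact: rn.
    - exact: rn.
    - by have := tri hS x2 x1 y1; rewrite (relC hS y1 x1) (relC hS x2 x1).
    right; rewrite hz Wd (Wo _ _ n1) (Wo _ _ nx) (Wo _ _ n4).
    by rewrite invf_div mulr1.
  case: (eqVneq x1 y2) => [e3|n3].
    subst y2; case: (eqVneq x2 y1) => [e4|n4].
      subst y1; apply: Or31; exists (rel x1 x2); split; first exact: rn.
      left; rewrite hz !Wd (Wo _ _ nx) (Wo _ _ nx') (relC hS x2 x1).
      by rewrite mulr1 divr1 expr2.
    apply: Or32; exists (rel x1 y1), (rel x1 x2), (rel x2 y1); split.
    - exact: rn.
    - exact: rn.
    - exact: rn.
    - exact: tri.
    left; rewrite hz Wd (Wo _ _ n1) (Wo _ _ nx') (Wo _ _ n4) (relC hS x2 x1).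
    by rewrite mul1r.
  case: (eqVneq x2 y1) => [e4|n4].
    subst y1.
    apply: Or32; exists (rel x2 y2), (rel x1 x2), (rel x1 y2); split.
    - exact: rn.
    - exact: rn.
    - exact: rn.
    - by have := tri hS x2 y2 x1; rewrite (relC hS x2 x1).
    left; rewrite hz Wd (Wo _ _ nx) (Wo _ _ n2) (Wo _ _ n3).
    by rewrite mulr1 [w (rel x1 x2) * _]mulrC.
  apply: Or33; exists (rel x1 y1), (rel x2 y2), (rel x1 y2), (rel x2 y1); split.
  - exact: rn.
  - exact: rn.
  - exact: rn.
  - exact: rn.
  by rewrite hz !Wo.
have relne : forall x y (i : 'I_4), rel x y = i -> i != ord0 -> x != y.
  by move=> x y i <-; rewrite (rel0 hS).
have quad : forall a1 a2 b1 b2 : 'I_4, a1 != ord0 -> a2 != ord0 -> b1 != ord0 ->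
    b2 != ord0 -> ~~ ((a1 == o3) && (b2 == o3)) -> ~~ ((b1 == o3) && (a2 == o3)) ->
    haagerup (Wmat rel w) (w a1 * w a2 / (w b1 * w b2)).
  move=> a1 a2 b1 b2 Ha1 Ha2 Hb1 Hb2 c1 c2.
  have [x1 [x2 r12]] := Hex o2.
  have [y1 [r1 r2]] := count_pos qh h2 Heig r12 Ha1 Hb2 c1.
  have [y2 [r3 r4]] := count_pos qh h2 Heig r12 Hb1 Ha2 c2.
  exists x1, x2, y1, y2.
  rewrite (relC hS) in r2; rewrite (relC hS) in r4.
  rewrite (Wo _ _ (relne _ _ _ r1 Ha1)) (Wo _ _ (relne _ _ _ r4 Ha2)).
  rewrite (Wo _ _ (relne _ _ _ r3 Hb1)) (Wo _ _ (relne _ _ _ r2 Hb2)).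
  by rewrite r1 r2 r3 r4.
case => [[i [Hi [->|->]]] | [i1 [i2 [i3 [H1 H2 H3 Hp [->|->]]]]] |
         [i1 [i2 [j1 [j2 [H1 H2 H3 H4 ->]]]]]].
- have [x [y rxy]] := Hex i; have nxy := relne _ _ _ rxy Hi.
  have nyx : y != x by rewrite eq_sym.
  exists x, y, y, x; rewrite !Wd (Wo _ _ nxy) (Wo _ _ nyx) (relC hS y x) rxy.
  by rewrite mulr1 divr1 expr2.
- have [x [y rxy]] := Hex i; have nxy := relne _ _ _ rxy Hi.
  have nyx : y != x by rewrite eq_sym.
  exists x, y, x, y; rewrite !Wd (Wo _ _ nxy) (Wo _ _ nyx) (relC hS y x) rxy.
  by rewrite mulr1 div1r expr2.
- have [u [v [t [ruv rut rtv]]]] := tri_inv Hp.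
  have nuv := relne _ _ _ ruv H1.
  have nut := relne _ _ _ rut H2.
  have ntv := relne _ _ _ rtv H3.
  have ntu : t != u by rewrite eq_sym.
  exists u, t, v, u; rewrite Wd (Wo _ _ nuv) (Wo _ _ ntu) (Wo _ _ ntv) (relC hS t u).
  by rewrite ruv rut rtv mul1r.
- have [u [v [t [ruv rut rtv]]]] := tri_inv Hp.
  have nuv := relne _ _ _ ruv H1.
  have nut := relne _ _ _ rut H2.
  have ntv := relne _ _ _ rtv H3.
  have ntu : t != u by rewrite eq_sym.
  exists u, t, u, v; rewrite Wd (Wo _ _ nuv) (Wo _ _ ntu) (Wo _ _ ntv) (relC hS t u).
  by rewrite ruv rut rtv mul1r invf_div.
have o3n : o3 != ord0 by [].
have w1 := wnz _ o1n.
case: (boolP ((i1 == o3) && (j2 == o3))) => [/andP [/eqP e1 /eqP e2] | c1].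
  subst i1 j2.
  case: (boolP ((j1 == o3) && (i2 == o3))) => [/andP [/eqP e3 /eqP e4] | c2].
    subst j1 i2; rewrite divff ?mulf_neq0 ?wnz //.
    by rewrite -(divff (mulf_neq0 w1 w1)); apply: (quad o1 o1 o1 o1).
  have -> : w o3 * w i2 / (w j1 * w o3) = w o1 * w i2 / (w j1 * w o1).
    by field; rewrite ?wnz.
  by apply: (quad o1 i2 j1 o1).
case: (boolP ((j1 == o3) && (i2 == o3))) => [/andP [/eqP e3 /eqP e4] | c2].
  subst j1 i2.
  have -> : w i1 * w o3 / (w o3 * w j2) = w i1 * w o1 / (w o1 * w j2).
    by field; rewrite ?wnz.
  by apply: (quad i1 o1 o1 j2).
exact: (quad i1 i2 j1 j2).
Qed.
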